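(* Let $\Sigma$ be a non-empty finite alphabet and $L \subseteq \Sigma^*$ a commutative group language over $\Sigma$. Then for every $\Gamma \subseteq \Sigma$, the language $\pi_\Gamma(L)$ is a commutative group language over the alphabet $\Gamma$.
   Context: $L$ is commutative if for every $w \in L$, every word $u$ with $|u|_a = |w|_a$ for all letters $a$ also lies in $L$. A group language over an alphabet $\Delta$ is a language recognized by a permutation automaton over $\Delta$, i.e. a complete deterministic finite automaton $(\Delta,Q,\delta,q_0,F)$ in which each letter acts as a permutation of $Q$; by convention, for $\Delta = \emptyset$ the group languages over $\Delta$ are exactly $\emptyset$ and $\{\varepsilon\}$. For $\Gamma \subseteq \Sigma$, $\pi_\Gamma : \Sigma^* \to \Gamma^*$ is the homomorphism with $\pi_\Gamma(x) = x$ for $x \in \Gamma$ and $\pi_\Gamma(x) = \varepsilon$ otherwise, applied elementwise to languages. *)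

(* Defs.v *)
From mathcomp Require Import all_boot.
Set Implicit Arguments. Unset Strict Implicit. Unset Printing Implicit Defensive.

Definition language (A : finType) := seq A -> Prop.

Definition commutative_lang (A : finType) (L : language A) : Prop :=
  forall w, L w -> forall u : seq A,
    (forall a : A, count_mem a u = count_mem a w) -> L u.

Definition run (A Q : Type) (d : Q -> A -> Q) (q : Q) (w : seq A) : Q :=
  foldl d q w.

(* L is a group language over A: recognized by a permutation automaton,
   i.e. a complete DFA (A, Q, d, q0, F) with finite state set Q in which every
   letter acts as a permutation (injective map on a finite set) of Q. *)
Definition group_lang (A : finType) (L : language A) : Prop :=
  exists (Q : finType) (d : Q -> A -> Q) (q0 : Q) (F : {set Q}),
    (forall a : A, injective (fun q => d q a)) /\
    (forall w : seq A, L w <-> run d q0 w \in F).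

Definition subalph (Sigma : finType) (G : {set Sigma}) : finType :=
  {x : Sigma | x \in G}.

Definition proj_word (Sigma : finType) (G : {set Sigma}) (w : seq Sigma)
  : seq (subalph G) :=
  pmap (fun x => insub x) w.

Definition proj_lang (Sigma : finType) (G : {set Sigma}) (L : language Sigma)
  : language (subalph G) :=
  fun v => exists w, L w /\ proj_word G w = v.
Arguments proj_lang {Sigma} G L _.
Arguments proj_word {Sigma} G w.

(* Main.v *)
Require Import Defs.
From mathcomp Require Import all_boot.
From mathcomp Require Import fingroup perm cyclic.

Set Implicit Arguments. Unset Strict Implicit. Unset Printing Implicit Defensive.

Section Aux.
Variable Sigma : finType.
Variable G : {set Sigma}.

Lemma count_val_map (u : seq (subalph G)) (a : Sigma) :
  count_mem a (map val u) = if insub a is Some b then count_mem b u else 0.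
Proof.
rewrite count_map; case: insubP => [b Ha Hb | Ha].
  apply: eq_count => x /=; rewrite -Hb; apply/eqP/eqP => [/val_inj|->] //.
rewrite (@eq_count _ _ pred0) ?count_pred0 // => [[y Hy]] /=.
apply/negbTE/eqP => Hya; subst y; by rewrite Hy in Ha.
Qed.

Lemma count_split (p q : pred Sigma) s :
  count p (filter q s) + count p (filter (predC q) s) = count p s.
Proof.
elim: s => //= x s IH; case: (q x) => /=; case: (p x) => /=;
  rewrite -IH ?addSn ?addnS //.
Qed.

Lemma proj_val (u : seq (subalph G)) : proj_word G (map val u) = u.
Proof. rewrite /proj_word; apply: map_pK; exact: valK. Qed.

Lemma proj_nil s : all (fun x => x \notin G) s -> proj_word G s = [::].
Proof.
move=> Hs; apply: size0nil; rewrite /proj_word size_pmap_sub.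
elim: s Hs => //= x s IH /andP [Hx Hs]; by rewrite (negbTE Hx) IH.
Qed.

Lemma map_val_proj w : map val (proj_word G w) = filter (fun x => x \in G) w.
Proof. rewrite /proj_word (pmap_filter (@insubK _ _ _)). 
apply: eq_filter => x /=; by rewrite isSome_insub. Qed.

Definition can (c : Sigma -> nat) :=
  flatten [seq nseq (c a) a | a <- [seq a <- enum Sigma | a \notin G]].

Lemma all_flat c s : all (fun a => a \notin G) s ->
  all (fun x => x \notin G) (flatten [seq nseq (c a) a | a <- s]).
Proof.
elim: s => //= a s IH /andP [Ha Hs]; rewrite all_cat IH // andbT.
by apply/allP => x /nseqP [-> _].
Qed.

Lemma all_can c : all (fun x => x \notin G) (can c).
Proof. apply: all_flat; exact: filter_all. Qed.

Lemma count_can c b : count_mem b (can c) = (b \notin G) * c b.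
Proof.
rewrite /can count_flatten sumnE big_map big_map big_filter big_enum_cond /=.
under eq_bigr do rewrite count_nseq /=.
case Hb: (b \notin G).
  rewrite (bigD1 b) //= eqxx big1 ?addn0 ?mul1n // => a /andP [_ Hab].
  by rewrite (negbTE Hab).
rewrite big1 // => a Ha; case: eqP => [Hab|]; last by [].
by subst a; rewrite Ha in Hb.
Qed.
End Aux.

Section Aut.
Variables (A Q : finType) (d : Q -> A -> Q).
Hypothesis Hinj : forall a : A, injective (fun q => d q a).

Definition NQ := #|[set: {perm Q}]|.

Lemma NQ_gt0 : 0 < NQ.
Proof. exact: (cardG_gt0 [set: {perm Q}]%G). Qed.

Lemma iterNQ a q : iter NQ (fun q => d q a) q = q.
Proof.
have := @expg_cardG _ [set: {perm Q}]%G (perm (@Hinj a)) (in_setT _).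
move=> /(congr1 (fun s : {perm Q} => s q)); rewrite permX perm1 /NQ.
move=> H; rewrite -{2}H; apply: eq_iter => x; by rewrite permE.
Qed.

Lemma iter_mod a n q : iter n (fun q => d q a) q = iter (n %% NQ) (fun q => d q a) q.
Proof.
rewrite {1}(divn_eq n NQ) iterD.
elim: (n %/ NQ) => //= k IH; by rewrite mulSn iterD iterNQ.
Qed.

Lemma run_nseq a n q : run d q (nseq n a) = iter n (fun q => d q a) q.
Proof. elim: n q => //= n IH q. by rewrite IH -iterSr. Qed.

Lemma run_flat (c c' : A -> nat) s q : (forall a, c a %% NQ = c' a %% NQ) ->
  run d q (flatten [seq nseq (c a) a | a <- s]) =
  run d q (flatten [seq nseq (c' a) a | a <- s]).
Proof.
move=> H; elim: s q => //= a s IH q.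
by rewrite /run !foldl_cat -!/(run _ _ _) !run_nseq iter_mod H -iter_mod IH.
Qed.
End Aut.

Lemma run_map (Sigma Q : finType) (G : {set Sigma}) (d : Q -> Sigma -> Q) q
  (v : seq (subalph G)) :
  run (fun q (a : subalph G) => d q (val a)) q v = run d q (map val v).
Proof. by elim: v q => //= a v IH q; rewrite /run /= -!/(run _ _ _) IH. Qed.

Theorem mainTheorem6 (Sigma : finType) (hS : 0 < #|Sigma|)
  (L : language Sigma) :
  commutative_lang L -> group_lang L ->
  forall G : {set Sigma},
    commutative_lang (proj_lang G L) /\ group_lang (proj_lang G L).
Proof.
move=> Hc [Q [d [q0 [F [Hinj HL]]]]] G.
have cnt : forall (w : seq Sigma) (b : Sigma),
  count_mem b w = count_mem b (map val (proj_word G w)) +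
                  count_mem b (filter (fun x => x \notin G) w).
  by move=> w b; rewrite map_val_proj count_split.
split.
  move=> v [w [Lw <-]] u Hu.
  exists (map val u ++ filter (fun x => x \notin G) w); split.
    apply: (Hc w Lw) => a; rewrite count_cat (cnt w a) !count_val_map.
    by case: insubP => // b _ _; rewrite Hu.
  rewrite /proj_word pmap_cat -/(proj_word G _) -/(proj_word G _) proj_val proj_nil ?cats0 //.
  exact: filter_all.
set N := NQ Q.
have Npos : 0 < N by exact: NQ_gt0.
exists Q, (fun q (a : subalph G) => d q (val a)), q0,
  [set q | [exists f : {ffun Sigma -> 'I_N}, run d q (can G (fun a => f a)) \in F]].
split; first by move=> a x y /= /Hinj.
move=> v; rewrite run_map inE; split.
  move=> [w [Lw Hw]].
  have Lw' : L (map val v ++ can G (fun a => count_mem a w)).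
    apply: (Hc w Lw) => b; rewrite count_cat count_can [RHS](cnt w b) Hw.
    rewrite count_filter; case Hb: (b \notin G) => /=.
      rewrite mul1n count_val_map insubN ?Hb // add0n.
      by apply: eq_count => x /=; case: eqP => // ->; rewrite Hb.
    rewrite mul0n addn0 [X in _ = _ + X](@eq_count _ _ pred0) ?count_pred0 ?addn0 //.
    by move=> x /=; case: eqP => // ->; rewrite Hb.
  move/HL: Lw'; rewrite /run foldl_cat -!/(run _ _ _) => HF.
  apply/existsP; exists [ffun a => Ordinal (ltn_pmod (count_mem a w) Npos)].
  move: HF; rewrite /can; erewrite run_flat; first exact.
    exact: Hinj.
  by move=> a /=; rewrite ffunE /= modn_mod.
move=> /existsP [f Hf].
exists (map val v ++ can G (fun a => f a)); split.
  by apply/HL; rewrite /run foldl_cat.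
rewrite /proj_word pmap_cat -/(proj_word G _) -/(proj_word G _) proj_val proj_nil ?cats0 //.
exact: all_can.
Qed.
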